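(* For all $N\ge2$, $n\ge0$ and all $x\in\mathbb{T}^N=\{x\in\mathbb{C}^N:|x_j|=1\ \forall j\}$, $\sigma_n^{N-1}(x)$ is real and $\sigma_n^{N-1}(x)\ge0$.
   Context: $(t)_m=\prod_{i=1}^m(t+i-1)$. $\boldsymbol{Z}_{N,k}=\{\alpha\in\mathbb{Z}^N:\sum_i\alpha_i=0,\ \sum_i|\alpha_i|=2k\}$, $S_k(x)=\sum_{\alpha\in\boldsymbol{Z}_{N,k}}x^\alpha$, and for $\delta>0$, $\sigma_n^\delta(x)=\sum_{k=0}^n\frac{(-n)_k}{(-n-\delta)_k}S_k(x)$. *)

(* Defs.v *)
From HB Require Import structures.
From mathcomp Require Import all_boot all_order all_algebra.
Set Implicit Arguments. Unset Strict Implicit. Unset Printing Implicit Defensive.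
Import Order.TTheory GRing.Theory Num.Theory.
Local Open Scope ring_scope.

Definition poch (R : pzRingType) (t : R) (m : nat) : R :=
  \prod_(i < m) (t + i%:R).

Definition inZNk {N : nat} (k : nat) (a : 'I_N -> int) : bool :=
  (\sum_(i < N) a i == 0) && (\sum_(i < N) absz (a i) == 2 * k)%N.

(* Every alpha in Z_{N,k} has entries in [-2k, 2k]; we enumerate those
   via f : 'I_N -> 'I_(4k+1), alpha_i = f i - 2k (an injective encoding). *)
Definition shiftZ (N k : nat) (f : {ffun 'I_N -> 'I_(4 * k + 1)}) : 'I_N -> int :=
  fun i => (nat_of_ord (f i))%:Z - (2 * k)%:Z.

Definition monoZ (C : unitRingType) (N : nat) (x : 'I_N -> C) (a : 'I_N -> int) : C :=
  \prod_(i < N) (x i) ^ (a i).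

Definition Sk (C : unitRingType) (N k : nat) (x : 'I_N -> C) : C :=
  \sum_(f : {ffun 'I_N -> 'I_(4 * k + 1)} | inZNk k (shiftZ f)) monoZ x (shiftZ f).

Definition sigma (C : fieldType) (N : nat) (delta : C) (n : nat) (x : 'I_N -> C) : C :=
  \sum_(k < n.+1)
     (poch (- (n%:R)) k / poch (- (n%:R) - delta) k) * Sk k x.

(* Main.v *)
Require Import Defs.
From HB Require Import structures.
From mathcomp Require Import all_boot all_order all_algebra zify ring lra.
Import Order.TTheory GRing.Theory Num.Theory.
Set Implicit Arguments. Unset Strict Implicit. Unset Printing Implicit Defensive.
Local Open Scope ring_scope.
Lemma poch_neq0 (F : numFieldType) (n m k : nat) : (k <= n)%N ->
  poch (- (n%:R) - m%:R : F) k != 0.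
Proof.
move=> kn; rewrite /poch prodf_seq_neq0; apply/allP => i _ /=.
have -> : (- (n%:R) - m%:R + i%:R : F) = - ((n + m - i)%N%:R).
  rewrite natrB; last by have := ltn_ord i; lia.
  by rewrite natrD; ring.
by rewrite oppr_eq0 pnatr_eq0; have := ltn_ord i; lia.
Qed.

Lemma poch_ratio (F : numFieldType) (n m k : nat) : (k <= n)%N ->
  'C(m + n, m)%:R * (poch (- (n%:R) : F) k / poch (- (n%:R) - m%:R) k)
  = 'C(m + (n - k), m)%:R.
Proof.
elim: k => [|k IH] kn.
  by rewrite /poch !big_ord0 divr1 mulr1 subn0.
have IH' := IH (ltnW kn).
have nz := @poch_neq0 F n m k (ltnW kn).
rewrite /poch !big_ord_recr /= -/(poch _ k) -/(poch _ k).
have nz2 : (- (n%:R) - m%:R + k%:R : F) != 0.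
  have := @poch_neq0 F n m k.+1 kn; rewrite /poch big_ord_recr /= mulf_eq0 negb_or.
  by case/andP.
rewrite (_ : _ * (_ / _) = 'C(m + n, m)%:R * (poch (- (n%:R) : F) k / poch (- (n%:R) - m%:R) k) *
  ((- (n%:R) + k%:R) / (- (n%:R) - m%:R + k%:R))); last by rewrite invfM; ring.
rewrite IH'.
have [j ->] : exists j, n = (k + j.+1)%N by exists (n - k.+1)%N; lia.
have -> : (k + j.+1 - k = j.+1)%N by lia.
have -> : (k + j.+1 - k.+1 = j)%N by lia.
have e : ((m + j.+1) * 'C(m + j, m) = j.+1 * 'C(m + j.+1, m))%N.
  by have := mul_bin_down (m + j.+1) m; rewrite addnS /= -addnS; move=> ->; congr (_ * _)%N; lia.
have -> : (- (k + j.+1)%N%:R + k%:R : F) = - (j.+1)%:R by rewrite natrD; ring.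
have -> : (- (k + j.+1)%N%:R - m%:R + k%:R : F) = - ((m + j.+1)%N%:R) by rewrite !natrD; ring.
rewrite mulrA; apply: (canLR (mulfK _)); first by rewrite oppr_eq0 pnatr_eq0 addnS.
by rewrite !mulrN -!natrM [('C(m + j, m) * _)%N]mulnC e mulnC.
Qed.
Definition Bn (N n : nat) (b : {ffun 'I_N -> 'I_n.+1}) : bool :=
  (\sum_(i < N) (b i : nat) == n)%N.
Arguments Bn {N n} b.

Definition Hs (C : unitRingType) (N n : nat) (x : 'I_N -> C) : C :=
  \sum_(b : {ffun 'I_N -> 'I_n.+1} | Bn b) \prod_(i < N) x i ^+ b i.

Definition Qs (C : unitRingType) (N n : nat) (x : 'I_N -> C) : C :=
  \sum_(b : {ffun 'I_N -> 'I_n.+1} | Bn b) \sum_(g : {ffun 'I_N -> 'I_n.+1} | Bn g)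
     monoZ x (fun i => (b i : nat)%:Z - (g i : nat)%:Z).

Lemma QsE (C : numClosedFieldType) (N n : nat) (x : 'I_N -> C) :
  (forall j : 'I_N, `|x j| = 1) -> Qs n x = Hs n x * (Hs n x)^*.
Proof.
move=> nx.
have xnz j : x j != 0 by rewrite -normr_eq0 nx oner_eq0.
have cj j : (x j)^* = (x j)^-1.
  by apply: (mulfI (xnz j)); rewrite -normCK nx expr1n mulfV.
rewrite /Hs rmorph_sum mulr_suml /Qs; apply: eq_bigr => b _.
rewrite mulr_sumr; apply: eq_bigr => g _.
rewrite rmorph_prod -big_split /monoZ; apply: eq_bigr => i _ /=.
rewrite (rmorphXn Num.conj_op) /= cj !exprnP exprz_inv expfzDr //.
Qed.
Lemma le_sum1 (N : nat) (F : 'I_N -> nat) j : (F j <= \sum_(i < N) F i)%N.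
Proof. by rewrite (bigD1 j) //= leq_addr. Qed.

Lemma sum_subC (N : nat) (b g : 'I_N -> nat) :
  (\sum_(i < N) b i = \sum_(i < N) g i)%N ->
  (\sum_(i < N) (b i - g i) = \sum_(i < N) (g i - b i))%N.
Proof.
move=> e.
have eb : (\sum_(i < N) b i = \sum_(i < N) (b i - g i) + \sum_(i < N) minn (b i) (g i))%N.
  by rewrite -big_split; apply: eq_bigr => i _ /=; lia.
have eg : (\sum_(i < N) g i = \sum_(i < N) (g i - b i) + \sum_(i < N) minn (b i) (g i))%N.
  by rewrite -big_split; apply: eq_bigr => i _ /=; lia.
lia.
Qed.

Lemma PoszS (N : nat) (F : 'I_N -> nat) :
  (\sum_(i < N) F i)%N%:Z = \sum_(i < N) (F i)%:Z.
Proof. exact: (big_morph Posz PoszD (erefl 0%:Z)). Qed.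

Lemma inZNk_nat N k (a : {ffun 'I_N -> 'I_(4 * k + 1)}) :
  inZNk k (shiftZ a) ->
  (\sum_(i < N) (a i - 2 * k) = k)%N /\ (\sum_(i < N) (2 * k - a i) = k)%N.
Proof.
rewrite /inZNk /shiftZ => /andP[/eqP s0 /eqP s1].
have e0 : \sum_(i < N) ((a i : nat)%:Z - (2 * k)%N%:Z)
        = (\sum_(i < N) (a i - 2 * k))%N%:Z - (\sum_(i < N) (2 * k - a i))%N%:Z.
  rewrite !PoszS -sumrB; apply: eq_bigr => i _; lia.
have e1 : (\sum_(i < N) absz ((a i : nat)%:Z - (2 * k)%N%:Z)
        = \sum_(i < N) (a i - 2 * k) + \sum_(i < N) (2 * k - a i))%N.
  rewrite -big_split; apply: eq_bigr => i _ /=; lia.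
rewrite e0 in s0; rewrite e1 in s1.
split; lia.
Qed.

Lemma card_bij (T U : finType) (A : pred T) (B : pred U) (f : T -> U) (g : U -> T) :
  (forall x, A x -> B (f x)) -> (forall y, B y -> A (g y)) ->
  (forall x, A x -> g (f x) = x) -> (forall y, B y -> f (g y) = y) ->
  #|[set x | A x]| = #|[set y | B y]|.
Proof.
move=> fAB gBA gf fg; apply/eqP; rewrite eqn_leq; apply/andP; split.
  rewrite -(@card_in_imset _ _ f); last first.
    by move=> x y; rewrite !inE => Ax Ay e; rewrite -(gf x Ax) -(gf y Ay) e.
  apply: subset_leq_card; apply/subsetP => y /imsetP[x]; rewrite !inE => Ax ->.
  exact: fAB.
rewrite -(@card_in_imset _ _ g); last first.
  by move=> x y; rewrite !inE => Ax Ay e; rewrite -(fg x Ax) -(fg y Ay) e.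
apply: subset_leq_card; apply/subsetP => y /imsetP[x]; rewrite !inE => Ax ->.
exact: gBA.
Qed.
Definition fib (N n k : nat) (a : {ffun 'I_N -> 'I_(4 * k + 1)})
  (p : {ffun 'I_N -> 'I_n.+1} * {ffun 'I_N -> 'I_n.+1}) : bool :=
  [&& Bn p.1, Bn p.2 & [forall i, (p.1 i + 2 * k == p.2 i + a i)%N]].

Lemma aux1 u v n k : (k <= n -> v <= k -> u <= n - k -> u + v < n.+1)%N.
Proof. lia. Qed.

Lemma aux2 t a k : (t + (a - 2 * k) + 2 * k = t + (2 * k - a) + a)%N.
Proof. lia. Qed.

Lemma aux3 b c a k : (b + 2 * k = c + a -> minn b c + (a - 2 * k) = b)%N.
Proof. lia. Qed.
Lemma aux4 b c a k : (b + 2 * k = c + a -> minn b c + (2 * k - a) = c)%N.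
Proof. lia. Qed.
Lemma aux5 t a k : (minn (t + (a - 2 * k)) (t + (2 * k - a)) = t)%N.
Proof. lia. Qed.

Ltac nlia := repeat match goal with | x := _ |- _ => clearbody x end; lia.

Lemma card_fib m n k (a : {ffun 'I_m.+1 -> 'I_(4 * k + 1)}) : (k <= n)%N ->
  inZNk k (shiftZ a) -> #|[set p : {ffun 'I_m.+1 -> 'I_n.+1} * {ffun 'I_m.+1 -> 'I_n.+1} | fib a p]| = 'C(m + (n - k), m).
Proof.
move=> kn /inZNk_nat [sP sM].
rewrite -(card_ord_partitions m (n - k)).
pose P i := (a i - 2 * k)%N; pose M i := (2 * k - a i)%N.
have leP i : (P i <= k)%N by have := le_sum1 (fun i => a i - 2 * k)%N i; rewrite sP.
have leM i : (M i <= k)%N by have := le_sum1 (fun i => 2 * k - a i)%N i; rewrite sM.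
pose g (p : {ffun 'I_m.+1 -> 'I_n.+1} * {ffun 'I_m.+1 -> 'I_n.+1}) : m.+1.-tuple 'I_(n - k).+1 :=
  [tuple (inord (minn (p.1 i) (p.2 i)) : 'I_(n - k).+1) | i < m.+1].
pose f (t : m.+1.-tuple 'I_(n - k).+1) : {ffun 'I_m.+1 -> 'I_n.+1} * {ffun 'I_m.+1 -> 'I_n.+1} :=
  ([ffun i => inord (tnth t i + P i)], [ffun i => inord (tnth t i + M i)]).
have fibE (p : {ffun 'I_m.+1 -> 'I_n.+1} * {ffun 'I_m.+1 -> 'I_n.+1}) : fib a p ->
   (\sum_(i < m.+1) minn (p.1 i) (p.2 i) = n - k)%N /\
   (forall i, p.1 i + 2 * k = p.2 i + a i)%N.
  case/and3P => /eqP s1 /eqP s2 /forallP e.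
  have e' i : (p.1 i + 2 * k = p.2 i + a i)%N by apply/eqP/e.
  split=> //.
  have : (\sum_(i < m.+1) p.1 i = \sum_(i < m.+1) minn (p.1 i) (p.2 i) + \sum_(i < m.+1) P i)%N.
    by rewrite -big_split; apply: eq_bigr => i _ /=; have := e' i; rewrite /P; nlia.
  rewrite s1 /P sP; nlia.
have tE (t : m.+1.-tuple 'I_(n - k).+1) : (\sum_(i <- t) (i : nat) == n - k)%N ->
    (\sum_(i < m.+1) tnth t i = n - k)%N /\ (forall i, tnth t i <= n - k)%N.
  rewrite big_tuple => /eqP s; split=> // i.
  by have := le_sum1 (fun i => (tnth t i : nat)) i; rewrite s.
apply: (card_bij (f := g) (g := f)).
- move=> p /fibE [s e]; rewrite big_tuple.
  have -> : (\sum_(i < m.+1) (tnth (g p) i : nat) = \sum_(i < m.+1) minn (p.1 i) (p.2 i))%N.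
    apply: eq_bigr => i _; rewrite tnth_mktuple inordK //.
    by rewrite ltnS -s (le_sum1 (fun i => minn (p.1 i) (p.2 i))).
  by rewrite s.
- move=> t /tE [s le]; rewrite /fib /Bn /=.
  have v1 i : ([ffun i => (inord (tnth t i + P i) : 'I_n.+1)] i : nat) = (tnth t i + P i)%N.
    by rewrite ffunE inordK //; apply: aux1 kn (leP i) (le i).
  have v2 i : ([ffun i => (inord (tnth t i + M i) : 'I_n.+1)] i : nat) = (tnth t i + M i)%N.
    by rewrite ffunE inordK //; apply: aux1 kn (leM i) (le i).
  apply/and3P; split.
  + under eq_bigr do rewrite v1. by rewrite big_split /= s sP subnK.
  + under eq_bigr do rewrite v2. by rewrite big_split /= s sM subnK.
  + by apply/forallP => i; rewrite v1 v2 /P /M aux2.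
- move=> p /fibE [s e].
  have mn i : (minn (p.1 i) (p.2 i) < (n - k).+1)%N.
    by rewrite ltnS -s (le_sum1 (fun i => minn (p.1 i) (p.2 i))).
  case: p s e mn => b c /= s e mn.
  congr pair; apply/ffunP => i; apply: val_inj; rewrite ffunE /= tnth_mktuple.
    have h : (minn (b i) (c i) + P i = b i)%N := aux3 (e i).
    by rewrite (inordK (mn i)) h inordK.
  have h : (minn (b i) (c i) + M i = c i)%N := aux4 (e i).
  by rewrite (inordK (mn i)) h inordK.
- move=> t /tE [s le].
  apply: eq_from_tnth => i; rewrite tnth_mktuple; apply: val_inj => /=.
  rewrite !ffunE !inordK; first by rewrite /P /M aux5.
  all: first [exact: aux1 kn (leM i) (le i) | exact: aux1 kn (leP i) (le i)
             | by rewrite /P /M aux5 ltnS].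
Qed.

Definition kp (N n : nat) (p : {ffun 'I_N -> 'I_n.+1} * {ffun 'I_N -> 'I_n.+1}) : nat :=
  (\sum_(i < N) (p.1 i - p.2 i))%N.

Definition d0 (k : nat) : 'I_(4 * k + 1) := Ordinal (ltn_addl (4 * k) (ltnSn 0)).

Definition pa (N n k : nat) (p : {ffun 'I_N -> 'I_n.+1} * {ffun 'I_N -> 'I_n.+1})
  : {ffun 'I_N -> 'I_(4 * k + 1)} :=
  [ffun i => insubd (d0 k) (p.1 i + 2 * k - p.2 i)%N].

Lemma aux6 b c k s : (b - c <= s -> c - b <= s -> s = k ->
   b + 2 * k - c < 4 * k + 1 /\ b + 2 * k = c + (b + 2 * k - c))%N.
Proof. lia. Qed.

Lemma kp_props N n (p : {ffun 'I_N -> 'I_n.+1} * {ffun 'I_N -> 'I_n.+1}) :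
  Bn p.1 -> Bn p.2 ->
  [/\ (kp p <= n)%N, (\sum_(i < N) (p.2 i - p.1 i) = kp p)%N &
      forall i, (p.1 i - p.2 i <= kp p)%N /\ (p.2 i - p.1 i <= kp p)%N].
Proof.
move=> /eqP s1 /eqP s2.
have e : (\sum_(i < N) (p.2 i - p.1 i) = kp p)%N.
  by rewrite /kp; symmetry; apply: sum_subC; rewrite s1 s2.
split=> //.
- rewrite -{2}s1 /kp; apply: leq_sum => i _; exact: leq_subr.
- move=> i; split; first exact: (le_sum1 (fun i => (p.1 i - p.2 i)%N)).
  by rewrite -e; exact: (le_sum1 (fun i => (p.2 i - p.1 i)%N)).
Qed.

Lemma pa_val N n k (p : {ffun 'I_N -> 'I_n.+1} * {ffun 'I_N -> 'I_n.+1}) :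
  Bn p.1 -> Bn p.2 -> kp p = k ->
  forall i, (p.1 i + 2 * k = p.2 i + pa k p i)%N.
Proof.
move=> b1 b2 ek i; have [_ _ /(_ i) [h1 h2]] := kp_props b1 b2.
have [lt eq] := aux6 h1 h2 ek.
by rewrite ffunE val_insubd lt.
Qed.

Lemma pa_inZNk N n k (p : {ffun 'I_N -> 'I_n.+1} * {ffun 'I_N -> 'I_n.+1}) :
  Bn p.1 -> Bn p.2 -> kp p = k -> inZNk k (shiftZ (pa k p)).
Proof.
move=> b1 b2 ek; have v := pa_val b1 b2 ek.
have [_ e _] := kp_props b1 b2.
have sh i : shiftZ (pa k p) i = (p.1 i : nat)%:Z - (p.2 i : nat)%:Z.
  by rewrite /shiftZ; have := v i; lia.
apply/andP; split.
  under eq_bigr do rewrite sh.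
  by rewrite sumrB -!PoszS (eqP b1) (eqP b2) subrr.
under eq_bigr do rewrite sh.
have -> : (\sum_(i < N) absz ((p.1 i : nat)%:Z - (p.2 i : nat)%:Z)
   = \sum_(i < N) (p.1 i - p.2 i) + \sum_(i < N) (p.2 i - p.1 i))%N.
  by rewrite -big_split; apply: eq_bigr => i _ /=; lia.
by rewrite e -/(kp p) ek addnn -mul2n.
Qed.

Lemma fib_iff N n (k : 'I_n.+1) (a : {ffun 'I_N -> 'I_(4 * k + 1)})
  (p : {ffun 'I_N -> 'I_n.+1} * {ffun 'I_N -> 'I_n.+1}) :
  inZNk k (shiftZ a) ->
  ((Bn p.1 && Bn p.2) && (inord (kp p) == k)) && (pa k p == a) = fib a p.
Proof.
move=> /inZNk_nat [sP sM].
rewrite /fib; case b1: (Bn p.1) => //; case b2: (Bn p.2) => //=.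
have [kn _ _] := kp_props b1 b2.
apply/idP/idP.
- case/andP=> /eqP ek /eqP ea.
  have ek' : kp p = k by rewrite -ek inordK.
  apply/forallP => i; rewrite -ea; apply/eqP; exact: pa_val b1 b2 ek' i.
- move=> /forallP e.
  have e' i : (p.1 i + 2 * k = p.2 i + a i)%N by apply/eqP/e.
  have ek : kp p = k.
    rewrite -[RHS]sP /kp; apply: eq_bigr => i _; have := e' i; lia.
  apply/andP; split.
    by apply/eqP; apply: val_inj; rewrite /= ek inordK.
  apply/eqP/ffunP => i; apply: val_inj; rewrite ffunE val_insubd.
  have -> : (p.1 i + 2 * k - p.2 i = a i)%N by have := e' i; lia.
  by rewrite ltn_ord.
Qed.

Lemma monoZ_ext (C : unitRingType) N (x : 'I_N -> C) (v w : 'I_N -> int) :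
  v =1 w -> monoZ x v = monoZ x w.
Proof. by move=> e; apply: eq_bigr => i _; rewrite e. Qed.

Lemma Qs_sum (C : unitRingType) (m n : nat) (x : 'I_m.+1 -> C) :
  Qs n x = \sum_(k < n.+1) 'C(m + (n - k), m)%:R * Sk k x.
Proof.
rewrite /Qs pair_big_dep /=.
rewrite (partition_big (fun p => (inord (kp p) : 'I_n.+1)) xpredT) //=.
apply: eq_bigr => k _.
rewrite (partition_big (pa k) (fun a => inZNk k (shiftZ a))) /=; last first.
  case=> b c /andP[/andP[b1 b2] /eqP ek] /=.
  have [kn _ _] := kp_props b1 b2.
  by apply: pa_inZNk b1 b2 _; rewrite -ek inordK.
rewrite /Sk mulr_sumr; apply: eq_bigr => a ha.
rewrite (eq_bigl (fun p => p \in [set p | fib a p])); last first.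
  by move=> p; rewrite inE fib_iff.
rewrite (eq_bigr (fun _ => monoZ x (shiftZ a))); last first.
  move=> p; rewrite inE => /and3P[_ _ /forallP e].
  apply: monoZ_ext => i; rewrite /shiftZ; have := eqP (e i); lia.
rewrite sumr_const card_fib ?mulr_natl //.
exact: (valP k).
Qed.

Theorem corollary4p6 (C : numClosedFieldType) (N n : nat) (x : 'I_N -> C) :
  (2 <= N)%N ->
  (forall j : 'I_N, `|x j| = 1) ->
  sigma (N.-1)%:R n x \is Num.real /\ 0 <= sigma (N.-1)%:R n x.
Proof.
case: N x => [|m] x // _ nx /=.
set c : C := 'C(m + n, m)%:R.
have cpos : 0 < c by rewrite ltr0n bin_gt0 leq_addr.
have e : sigma m%:R n x = c^-1 * (Hs n x * (Hs n x)^*).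
  apply: (canRL (mulKf (lt0r_neq0 cpos))).
  rewrite -QsE // Qs_sum /sigma mulr_sumr; apply: eq_bigr => k _.
  by rewrite mulrA poch_ratio // -ltnS.
have ge : 0 <= sigma m%:R n x by rewrite e mulr_ge0 ?mul_conjC_ge0 // invr_ge0 ltW.
by split=> //; apply: ger0_real.
Qed.
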